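(* Let $n\ge1$ and let $A$ be a set with an $(n+1)$-ary operation $\theta$, binary operations $\alpha_1,\dots,\alpha_n$ and an element $e\in A$ such that $\alpha_i(a,a)=e$ and $\theta(\alpha_1(a,b),\dots,\alpha_n(a,b),b)=a$ for all $a,b\in A$, and such that $\theta$ is 2-associative, i.e. $\theta(a_1,\dots,a_n,\theta(b_1,\dots,b_n,c))=\theta(\theta(a_1,\dots,a_n,b_1),\dots,\theta(a_1,\dots,a_n,b_n),c)$ for all elements. Then: (a) $\theta(a,a,\dots,a,e)=a$ for every $a\in A$; (b) for any $b,c\in A$ there is a unique $a\in A$ with $\theta(a,a,\dots,a,b)=c$; (c) for any $a,c\in A$ there is a unique $b\in A$ with $\theta(a,a,\dots,a,b)=c$.
   Context: $\theta(a,a,\dots,a,x)$ denotes $\theta$ with $a$ in the first $n$ arguments and $x$ in the last. *)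

(* Defs.v *)
From mathcomp Require Import all_boot.
Set Implicit Arguments. Unset Strict Implicit. Unset Printing Implicit Defensive.

(* An (n+1)-ary operation theta on A is represented in curried form as
   theta : ('I_n -> A) -> A -> A : the first n arguments are given as a
   family indexed by 'I_n, the last argument separately. *)

Definition diag_app (A : Type) (n : nat) (theta : ('I_n -> A) -> A -> A)
  (a x : A) : A := theta (fun _ => a) x.

Definition two_associative (A : Type) (n : nat)
  (theta : ('I_n -> A) -> A -> A) : Prop :=
  forall (a b : 'I_n -> A) (c : A),
    theta a (theta b c) = theta (fun i => theta a (b i)) c.

(* Main.v *)
Require Import Defs.
From Stdlib Require Import FunctionalExtensionality.
From mathcomp Require Import all_boot.

Theorem corollary4p5 (A : Type) (n : nat) (Hn : 1 <= n)
  (theta : ('I_n -> A) -> A -> A) (alpha : 'I_n -> A -> A -> A) (e : A)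
  (Halpha_diag : forall (i : 'I_n) (a : A), alpha i a a = e)
  (Hrecover : forall a b : A, theta (fun i => alpha i a b) b = a)
  (Hassoc : two_associative theta) :
  (forall a : A, diag_app theta a e = a) /\
  (forall b c : A, exists! a : A, diag_app theta a b = c) /\
  (forall a c : A, exists! b : A, diag_app theta a b = c).
Proof.
set D := diag_app theta.
have Dassoc : forall x y c, D x (D y c) = D (D x y) c.
  by move=> x y c; rewrite /D /diag_app Hassoc.
have Hal : forall c, (fun i => alpha i c c) = (fun _ => e).
  by move=> c; apply: functional_extensionality => i; rewrite Halpha_diag.
have key : forall a c, theta a c = D (theta a e) c.
  move=> a c; have := Hassoc a (fun i => alpha i c c) c.
  rewrite Hrecover => ->.
  have -> : (fun i => theta a (alpha i c c)) = (fun _ => theta a e).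
    by apply: functional_extensionality => i; rewrite Halpha_diag.
  by [].
have De : forall x, D e x = x by move=> x; rewrite /D /diag_app -(Hal x) Hrecover.
have Dg : forall a c, D a c = D (D a e) c by move=> a c; rewrite {1}/D /diag_app key.
have gid : forall a, D a e = a.
  move=> a.
  have ha : a = D (theta (fun i => alpha i a e) e) e.
    by rewrite -key Hrecover.
  by rewrite ha -Dg.
have linv : forall b, D (theta (fun i => alpha i e b) e) b = e.
  by move=> b; rewrite -key Hrecover.
have rinv : forall b, D b (theta (fun i => alpha i e b) e) = e.
  move=> b; set u := theta _ e.
  set v := theta (fun i => alpha i e u) e.
  transitivity (D (D v u) (D b u)); first by rewrite linv De.
  by rewrite -Dassoc (Dassoc u b u) linv De linv.
split; first exact: gid.
split.
- move=> b c; exists (theta (fun i => alpha i c b) e); split.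
    by rewrite -key Hrecover.
  move=> a' Ha'.
  set w := theta (fun i => alpha i e b) e.
  have: D (D a' b) w = D (D (theta (fun i => alpha i c b) e) b) w.
    by rewrite -key Hrecover -/D Ha'.
  by rewrite -!Dassoc rinv !gid.
- move=> a c; set w := theta (fun i => alpha i e a) e.
  exists (D w c); split.
    by rewrite -/D Dassoc rinv De.
  move=> b' Hb'.
  by rewrite -/D -Hb' Dassoc linv De.
Qed.
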